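(* Let $n\in\mathbb N$, let $\mathcal H$ be a Hilbert space, and let $\phi:M_n(\mathbb C)\to B(\mathcal H)$ be a positive linear map. Then the restriction $\phi_0$ of $\phi$ to the operator system $C(S^1)^{(n)}$ of $n\times n$ Toeplitz matrices is completely positive, i.e. for every $p\in\mathbb N$ and every positive semidefinite $p\times p$ block matrix $[x_{ij}]$ with all $x_{ij}\in C(S^1)^{(n)}$, the operator matrix $[\phi(x_{ij})]$ is positive on $\mathcal H^p$.
   Context: $C(S^1)^{(n)}\subseteq M_n(\mathbb C)$ denotes the set of complex Toeplitz matrices $[\tau_{k-\ell}]_{k,\ell=0}^{n-1}$. A linear map is positive if it maps positive semidefinite matrices to positive operators. *)

(* Defs.v *)
From HB Require Import structures.
From mathcomp Require Import all_boot all_order all_algebra.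
From mathcomp Require Import reals complex.
Set Implicit Arguments. Unset Strict Implicit. Unset Printing Implicit Defensive.
Import Order.TTheory GRing.Theory Num.Theory.
Local Open Scope ring_scope.

Definition psd_kernel (R : realType) (I : finType) (A : I -> I -> R[i]) : Prop :=
  (forall i j, A j i = (A i j)^*) /\
  (forall v : I -> R[i], 0 <= \sum_i \sum_j (v i)^* * A i j * v j).

Definition psd_mx (R : realType) (m : nat) (A : 'M[R[i]]_m) : Prop :=
  psd_kernel (fun i j : 'I_m => A i j).

(* The p x p block matrix [x_ij] with n x n blocks, viewed as a kernel on
   'I_p * 'I_n (this is the (p n) x (p n) matrix up to reindexing). *)
Definition block_psd (R : realType) (p n : nat) (X : 'I_p -> 'I_p -> 'M[R[i]]_n) : Prop :=
  psd_kernel (fun a b : 'I_p * 'I_n => X a.1 b.1 a.2 b.2).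

Definition toeplitz (R : realType) (n : nat) (A : 'M[R[i]]_n) : Prop :=
  exists tau : int -> R[i], forall k l : 'I_n, A k l = tau (k%:Z - l%:Z).

Definition is_hilbert (R : realType) (V : lmodType R[i]) (ip : V -> V -> R[i]) : Prop :=
  [/\ (forall (a : R[i]) (x y z : V), ip (a *: x + y) z = a * ip x z + ip y z),
      (forall x y : V, ip y x = (ip x y)^*),
      (forall x : V, 0 <= ip x x),
      (forall x : V, ip x x = 0 -> x = 0) &
      (forall u : nat -> V,
         (forall eps : R[i], 0 < eps -> exists N : nat, forall m k : nat,
             (N <= m)%N -> (N <= k)%N -> ip (u m - u k) (u m - u k) < eps) ->
         exists l : V, forall eps : R[i], 0 < eps -> exists N : nat, forall m : nat,
             (N <= m)%N -> ip (u m - l) (u m - l) < eps)].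

Definition bounded_op (R : realType) (V : lmodType R[i]) (ip : V -> V -> R[i])
    (T : V -> V) : Prop :=
  (forall (a : R[i]) (x y : V), T (a *: x + y) = a *: T x + T y) /\
  (exists M : R[i], forall x : V, ip (T x) (T x) <= M * ip x x).

Definition pos_op (R : realType) (V : lmodType R[i]) (ip : V -> V -> R[i])
    (T : V -> V) : Prop :=
  forall h : V, 0 <= ip (T h) h.

Definition linear_to_BH (R : realType) (n : nat) (V : lmodType R[i])
    (ip : V -> V -> R[i]) (phi : 'M[R[i]]_n -> V -> V) : Prop :=
  (forall (a : R[i]) (A B : 'M[R[i]]_n) (h : V),
      phi (a *: A + B) h = a *: phi A h + phi B h) /\
  (forall A, bounded_op ip (phi A)).

Definition positive_map (R : realType) (n : nat) (V : lmodType R[i])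
    (ip : V -> V -> R[i]) (phi : 'M[R[i]]_n -> V -> V) : Prop :=
  forall A, psd_mx A -> pos_op ip (phi A).

(* Main.v *)
Require Import Defs.
From HB Require Import structures.
From mathcomp Require Import all_boot all_order all_algebra.
From mathcomp Require Import reals complex.
From mathcomp Require Import sesquilinear spectral.
From mathcomp Require Import ring.
Set Implicit Arguments. Unset Strict Implicit. Unset Printing Implicit Defensive.
Import Order.TTheory GRing.Theory Num.Theory.
Local Open Scope ring_scope.

Section Dil.
Variable C : numClosedFieldType.
Local Open Scope sesquilinear_scope.

Lemma adjM m n p (A : 'M[C]_(m,n)) (B : 'M[C]_(n,p)) : (A *m B)^t* = B^t* *m A^t*.
Proof. by rewrite trmx_mul map_mxM. Qed.
Lemma adjB m n (A B : 'M[C]_(m,n)) : (A - B)^t* = A^t* - B^t*.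
Proof. by apply/matrixP => i j; rewrite !mxE rmorphB. Qed.
Lemma adjD m n (A B : 'M[C]_(m,n)) : (A + B)^t* = A^t* + B^t*.
Proof. by apply/matrixP => i j; rewrite !mxE rmorphD. Qed.
Lemma adj1 n : (1%:M : 'M[C]_n)^t* = 1%:M.
Proof. by rewrite trmx1 map_mx1. Qed.
Lemma adj0 m n : (0 : 'M[C]_(m,n))^t* = 0.
Proof. by apply/matrixP => i j; rewrite !mxE rmorph0. Qed.

Lemma sum_delta n (F : 'I_n -> C) a : \sum_k (k == a)%:R * F k = F a.
Proof.
rewrite (bigD1 a) //= eqxx mul1r big1 ?addr0 // => k /negPf ->; by rewrite mul0r.
Qed.

Lemma quadE n (x : 'rV[C]_n) (M : 'M[C]_n) :
  (x *m M *m x^t*) 0 0 = \sum_i \sum_j x 0 i * M i j * (x 0 j)^*.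
Proof.
rewrite mxE; under eq_bigr => k _ do rewrite mxE mulr_suml.
rewrite exchange_big /=; apply: eq_bigr => i _; apply: eq_bigr => k _.
by rewrite !mxE.
Qed.

Lemma dotE n (w : 'rV[C]_n) : (w *m w^t*) 0 0 = \sum_i w 0 i * (w 0 i)^*.
Proof. by rewrite mxE; apply: eq_bigr => i _; rewrite !mxE. Qed.

Lemma dot_ge0 n (w : 'rV[C]_n) : 0 <= (w *m w^t*) 0 0.
Proof. by rewrite dotE sumr_ge0 // => i _; rewrite mul_conjC_ge0. Qed.

Lemma dot_eq0 n (w : 'rV[C]_n) : (w *m w^t*) 0 0 = 0 -> w = 0.
Proof.
rewrite dotE => /psumr_eq0P H; apply/rowP => i; rewrite mxE.
by apply/eqP; rewrite -mul_conjC_eq0; apply/eqP/H => // k _; rewrite mul_conjC_ge0.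
Qed.

Lemma quad_delta n (M : 'M[C]_n) j :
  ((delta_mx 0 j : 'rV[C]_n) *m M *m (delta_mx 0 j : 'rV[C]_n)^t*) 0 0 = M j j.
Proof.
rewrite quadE (bigD1 j) //= [X in _ + X]big1 ?addr0; last first.
  by move=> i /negPf ij; rewrite big1 // => k _; rewrite !mxE ij andbF mul0r mul0r.
rewrite (bigD1 j) //= [X in _ + X]big1 ?addr0; last first.
  by move=> k /negPf kj; rewrite !mxE kj andbF conjC0 mulr0.
by rewrite !mxE !eqxx /= conjC1 mul1r mulr1.
Qed.

Lemma dilation N (G : 'M[C]_N) (d : pred 'I_N) (s : 'I_N -> 'I_N) :
  G^t* = G ->
  (forall v : 'rV_N, 0 <= (v *m G *m v^t*) 0 0) ->
  (forall v : 'rV_N, (v *m G *m v^t*) 0 0 = 0 -> v = 0) ->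
  (forall i j, d i -> d j -> G (s i) (s j) = G i j) ->
  exists m (Xi : 'M[C]_(m, N)) (U : 'M[C]_m),
    [/\ Xi^t* *m Xi = G, U \is normalmx &
        forall j, d j -> U *m col j Xi = col (s j) Xi].
Proof.
move=> GH Gpsd Gpd Gt.
pose D : 'M[C]_N := diag_mx (\row_i (d i)%:R).
pose S : 'M[C]_N := \matrix_(i, j) ((d j)%:R * (i == s j)%:R).
have DH : D^t* = D.
  apply/matrixP => i j; rewrite !mxE rmorphMn rmorph_nat.
  by have [->|ne] := eqVneq i j; rewrite // (negPf ne) eq_sym (negPf ne).
have DD : D *m D = D.
  rewrite mulmx_diag; congr diag_mx; apply/rowP => i; rewrite !mxE.
  by case: (d i); rewrite ?mulr1 ?mulr0.
have DSGSD : D *m S^t* *m G *m S *m D = D *m G *m D.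
  apply/matrixP => i j.
  rewrite -!mulmxA mul_diag_mx mxE [in RHS]mul_diag_mx mxE !mulmxA.
  rewrite mul_mx_diag mxE [in RHS]mul_mx_diag mxE !mxE.
  case di: (d i); last by rewrite !mul0r.
  case dj: (d j); last by rewrite !mulr0.
  rewrite !mul1r !mulr1.
  under eq_bigr => l _ do rewrite !mxE.
  under eq_bigr => l _ do under eq_bigr => k _ do rewrite !mxE rmorphM !rmorph_nat di mul1r.
  under eq_bigr => l _ do rewrite sum_delta.
  under eq_bigr => l _ do rewrite dj mul1r mulrC.
  by rewrite sum_delta Gt.
have SD : forall j, d j -> S *m (delta_mx j 0 : 'cV[C]_N) = delta_mx (s j) 0.
  move=> j dj; apply/colP => i; rewrite !mxE (bigD1 j) //= big1 ?addr0.
    by rewrite !mxE dj mul1r eqxx /= mulr1; case: (i == s j).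
  by move=> l /negPf lj; rewrite !mxE lj mulr0.
have DDj : forall j, d j -> D *m (delta_mx j 0 : 'cV[C]_N) = delta_mx j 0.
  move=> j dj; apply/colP => i; rewrite !mxE (bigD1 j) //= big1 ?addr0.
    rewrite !mxE eqxx /= mulr1; have [->|ne] := eqVneq i j; first by rewrite dj eqxx.
    by rewrite mulr0n.
  by move=> l /negPf lj; rewrite !mxE lj mulr0.
clearbody D S.
pose A : 'M[C]_N := D *m G *m D + (1%:M - D).
have D1H : (1%:M - D)^t* = 1%:M - D by rewrite adjB adj1 DH.
have D1D1 : (1%:M - D) *m (1%:M - D) = 1%:M - D.
  by rewrite mulmxBl !mulmxBr !mul1mx ?mulmx1 DD subrr subr0.
have AH : A^t* = A.
  by rewrite /A adjD !adjM D1H DH GH mulmxA.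
have Aunit : A \in unitmx.
  rewrite unitmxE unitfE; apply/negP => /det0P [v vn0 vA].
  have q0 : (v *m A *m v^t*) 0 0 = 0 by rewrite vA mul0mx mxE.
  have e1 : v *m A *m v^t* = (v *m D) *m G *m (v *m D)^t* + (v *m (1%:M - D)) *m (v *m (1%:M - D))^t*.
    rewrite !adjM DH D1H /A mulmxDr mulmxDl !mulmxA -[v *m (1%:M - D) *m (1%:M - D)]mulmxA D1D1.
    by rewrite -!mulmxA.
  move: q0; rewrite e1 mxE => /eqP; rewrite paddr_eq0 ?Gpsd ?dot_ge0 //.
  case/andP => /eqP/Gpd vD0 /eqP/dot_eq0 vD1.
  move/eqP: vn0; apply.
  by rewrite -[v]mulmx1 -[1%:M](subrK D) mulmxDr vD0 vD1 addr0.
have AD : A *m D = D *m G *m D.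
  by rewrite /A mulmxDl mulmxBl mul1mx DD subrr addr0 -mulmxA DD.
have DA : D *m A = D *m G *m D.
  by rewrite /A mulmxDr mulmxBr mulmx1 DD subrr addr0 !mulmxA DD.
clearbody A.
pose Ai := invmx A.
have AiA : Ai *m A = 1%:M by rewrite mulVmx.
have AAi : A *m Ai = 1%:M by rewrite mulmxV.
have AiH : Ai^t* = Ai by rewrite /Ai trmx_inv map_invmx AH.
clearbody Ai.
have AiD : Ai *m D = D *m Ai.
  have := congr1 (fun X => Ai *m X *m Ai) (etrans AD (esym DA)).
  by rewrite /= !mulmxA AiA mul1mx -!mulmxA AAi mulmx1.
pose H := D *m Ai *m D.
have HE : H = Ai *m D by rewrite /H -AiD -mulmxA DD.
have HH : H^t* = H by rewrite /H !adjM DH AiH mulmxA.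
clearbody H.
have HD : H *m D = H by rewrite HE -mulmxA DD.
have DH' : D *m H = H by rewrite HE mulmxA -AiD -mulmxA DD.
have HGD : H *m G *m D = D.
  by rewrite HE -!mulmxA (mulmxA D) -AD mulmxA AiA mul1mx.
have HGH : H *m G *m H = H by rewrite -{2}DH' mulmxA HGD DH'.
have HSGSH : H *m S^t* *m G *m S *m H = H.
  transitivity (H *m (D *m S^t* *m G *m S *m D) *m H).
    by rewrite !mulmxA HD -!mulmxA DH'.
  by rewrite DSGSD !mulmxA HD HGD DH'.
have Gn : G \is normalmx by apply/normalmxP; rewrite GH.
have GE := orthomx_spectralP Gn.
pose P := spectralmx G; pose mu := spectral_diag G.
have Pu : P \is unitarymx by exact: spectral_unitarymx.
have PiP : invmx P = P^t* by rewrite invmx_unitary.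
have PPt : P *m P^t* = 1%:M by apply/unitarymxP.
have PtP : P^t* *m P = 1%:M by apply: mulmx1C.
have GE' : G = P^t* *m diag_mx mu *m P by rewrite -PiP.
clear GE.
have mu_ge0 : forall j, 0 <= mu 0 j.
  move=> j; have := Gpsd ((delta_mx 0 j : 'rV[C]_N) *m P).
  have -> : ((delta_mx 0 j : 'rV[C]_N) *m P) *m G *m ((delta_mx 0 j : 'rV[C]_N) *m P)^t*
     = (delta_mx 0 j : 'rV[C]_N) *m (P *m G *m P^t*) *m (delta_mx 0 j : 'rV[C]_N)^t*.
    by rewrite adjM !mulmxA.
  have -> : P *m G *m P^t* = diag_mx mu.
    by rewrite GE' !mulmxA PPt mul1mx -mulmxA PPt mulmx1.
  by rewrite quad_delta mxE eqxx mulr1n.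
clearbody P mu.
pose sq := \row_j sqrtC (mu 0 j).
pose B := diag_mx sq *m P.
have sqH : (diag_mx sq)^t* = diag_mx sq.
  rewrite tr_diag_mx map_diag_mx; congr diag_mx; apply/rowP => j.
  by rewrite !mxE; apply: geC0_conj; rewrite sqrtC_ge0.
have BB : B^t* *m B = G.
  rewrite /B adjM sqH -mulmxA (mulmxA (diag_mx sq)) mulmx_diag GE'.
  rewrite mulmxA; congr (_ *m _ *m _); congr diag_mx; apply/rowP => j.
  by rewrite !mxE -expr2 sqrtCK.
clearbody B.
pose K := B *m S *m H *m B^t*.
pose Pr := B *m H *m B^t*.
have KH : K^t* = B *m H *m S^t* *m B^t* by rewrite /K !adjM trmxCK HH !mulmxA.
have KK : K^t* *m K = Pr.
  have -> : K^t* *m K = B *m (H *m S^t* *m (B^t* *m B) *m S *m H) *m B^t*.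
    by rewrite KH /K !mulmxA.
  by rewrite BB HSGSH.
have KPr : K *m Pr = K.
  have -> : K *m Pr = B *m S *m (H *m (B^t* *m B) *m H) *m B^t*.
    by rewrite /K /Pr !mulmxA.
  by rewrite BB HGH.
have PrH : Pr^t* = Pr by rewrite /Pr !adjM trmxCK HH mulmxA.
have KE : K = B *m S *m H *m B^t* by [].
have PrE : Pr = B *m H *m B^t* by [].
clearbody K Pr.
pose Q := K *m K^t*.
have QH : Q^t* = Q by rewrite /Q adjM trmxCK.
have QK : Q *m K = K by rewrite /Q -mulmxA KK KPr.
have PrK : Pr *m K^t* = K^t* by rewrite -PrH -adjM KPr.
have KQ : K^t* *m Q = K^t* by rewrite -QH -adjM QK.
have QQ : Q *m Q = Q by rewrite {1}/Q -mulmxA KQ.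
have PrPr : Pr *m Pr = Pr by rewrite -{1}KK -mulmxA KPr KK.
have QE : K *m K^t* = Q by [].
clearbody Q.
pose U := block_mx K (1%:M - Q) (1%:M - Pr) (K^t*).
have UH : U^t* = block_mx (K^t*) (1%:M - Pr) (1%:M - Q) K.
  by rewrite /U tr_block_mx map_block_mx !adjB !adj1 QH PrH trmxCK.
have U1 : U *m U^t* = 1%:M.
  rewrite UH /U mulmx_block scalar_mx_block.
  rewrite !mulmxBl !mulmxBr !mul1mx !mulmx1 ?QQ ?PrPr ?KK ?QK ?KPr ?PrK ?KQ.
  rewrite ?QE !subrr !addr0 !subr0.
  by congr block_mx; rewrite ?subrK // addrC subrK.
have U2 : U^t* *m U = 1%:M.
  rewrite UH /U mulmx_block scalar_mx_block.
  rewrite !mulmxBl !mulmxBr !mul1mx !mulmx1 ?QQ ?PrPr ?KK ?QK ?KPr ?PrK ?KQ.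
  rewrite ?QE !subrr !addr0 !subr0.
  by congr block_mx; rewrite ?subrK // addrC subrK.
have KBj : forall j : 'I_N, d j -> K *m (B *m (delta_mx j 0 : 'cV[C]_N)) = B *m delta_mx (s j) 0.
  move=> j dj.
  have -> : K *m (B *m (delta_mx j 0 : 'cV[C]_N)) = B *m S *m (H *m (B^t* *m B) *m D *m delta_mx j 0).
    by rewrite KE !mulmxA -[_ *m D *m _]mulmxA DDj.
  by rewrite BB HGD DDj // -mulmxA SD.
have PrBj : forall j : 'I_N, d j -> Pr *m (B *m (delta_mx j 0 : 'cV[C]_N)) = B *m delta_mx j 0.
  move=> j dj.
  have -> : Pr *m (B *m (delta_mx j 0 : 'cV[C]_N)) = B *m (H *m (B^t* *m B) *m D *m delta_mx j 0).
    by rewrite PrE !mulmxA -[_ *m D *m _]mulmxA DDj.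
  by rewrite BB HGD DDj.
exists (N + N)%N, (col_mx B 0), U; split.
- by rewrite tr_col_mx map_row_mx mul_row_col BB adj0 mul0mx addr0.
- by apply/normalmxP; rewrite U1 U2.
move=> j dj; rewrite !colE !mul_col_mx !mul0mx /U !mul_row_col !mulmx0 !addr0.
by rewrite KBj // mulmxBl mul1mx PrBj // subrr.
Qed.
End Dil.



Lemma eps_lim (C : numFieldType) (t c : C) :
  0 <= c -> (forall e, 0 < e -> 0 <= t + e * c) -> 0 <= t.
Proof.
move=> c0 H; have h1 := H 1 ltr01; rewrite mul1r in h1.
have tr : t \is Num.real by rewrite -(addrK c t) realB ?ger0_real.
have [//|tlt] := real_leP (real0 _) tr.
have c1 : 0 < c + 1 by rewrite ltr_wpDl // ltr01.
pose e := - t / (c + 1).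
have ep : 0 < e by rewrite /e divr_gt0 // oppr_gt0.
have := H e ep.
have -> : t + e * c = t / (c + 1).
  rewrite /e; field; by rewrite gt_eqF.
rewrite pmulr_lge0 ?invr_gt0 // => t0.
by have := lt_le_trans tlt t0; rewrite ltxx.
Qed.

Section GLin.
Variables (K : nzRingType) (W Y : lmodType K) (F : W -> Y).
Hypothesis FL : forall a x y, F (a *: x + y) = a *: F x + F y.

Lemma F0 : F 0 = 0.
Proof.
have E := FL 1 0 0; rewrite !scale1r addr0 in E.
by have := congr1 (fun u => u - F 0) E; rewrite addrK subrr => <-.
Qed.
Lemma FD x y : F (x + y) = F x + F y.
Proof. by have := FL 1 x y; rewrite !scale1r. Qed.
Lemma FZ a x : F (a *: x) = a *: F x.
Proof. by have := FL a x 0; rewrite !addr0 F0 addr0. Qed.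
Lemma FB x y : F (x - y) = F x - F y.
Proof. by rewrite FD -scaleN1r FZ scaleN1r. Qed.
Lemma F_sum I (r : seq I) (P : pred I) (G : I -> W) :
  F (\sum_(i <- r | P i) G i) = \sum_(i <- r | P i) F (G i).
Proof.
elim/big_rec2: _ => [|i y1 y2 _ <-]; first exact: F0.
by rewrite FD.
Qed.
End GLin.

Section IPLin.
Variables (R : realType) (V : lmodType R[i]) (ip : V -> V -> R[i]).
Hypothesis ipL : forall (a : R[i]) (x y z : V), ip (a *: x + y) z = a * ip x z + ip y z.
Hypothesis ipC : forall x y : V, ip y x = (ip x y)^*.

Lemma ip_sumZl I (r : seq I) (c : I -> R[i]) (g : I -> V) z :
  ip (\sum_(i <- r) c i *: g i) z = \sum_(i <- r) c i * ip (g i) z.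
Proof.
pose F := fun x => (ip x z : R[i]^o).
have FL' : forall a x y, F (a *: x + y) = a *: F x + F y by move=> *; exact: ipL.
rewrite -/(F _) (F_sum FL'); apply: eq_bigr => i _; exact: (FZ FL').
Qed.

Lemma ip_sumZr I (r : seq I) (c : I -> R[i]) (g : I -> V) z :
  ip z (\sum_(i <- r) c i *: g i) = \sum_(i <- r) (c i)^* * ip z (g i).
Proof.
rewrite ipC ip_sumZl rmorph_sum; apply: eq_bigr => i _.
by rewrite rmorphM [in RHS]ipC.
Qed.

Lemma ip_quad (T : V -> V) (TL : forall a x y, T (a *: x + y) = a *: T x + T y)
  p (c : 'I_p -> R[i]) (h : 'I_p -> V) :
  ip (T (\sum_b c b *: h b)) (\sum_a c a *: h a)
  = \sum_a \sum_b (c a)^* * c b * ip (T (h b)) (h a).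
Proof.
rewrite (F_sum TL).
under eq_bigr => b _ do rewrite (FZ TL).
rewrite ip_sumZr; apply: eq_bigr => a _.
rewrite ip_sumZl mulr_sumr; apply: eq_bigr => b _.
by rewrite mulrA.
Qed.
End IPLin.

Lemma ipBl (R : realType) (V : lmodType R[i]) (ip : V -> V -> R[i])
  (ipL : forall (a : R[i]) (x y z : V), ip (a *: x + y) z = a * ip x z + ip y z) x y z :
  ip (x - y) z = ip x z - ip y z.
Proof.
pose F := fun x => (ip x z : R[i]^o).
have FL' : forall a x y, F (a *: x + y) = a *: F x + F y by move=> *; exact: ipL.
exact: (FB FL').
Qed.

Lemma sum_enum (C : nmodType) (T : finType) (F : 'I_#|T| -> C) :
  \sum_i F i = \sum_(x : T) F (enum_rank x).
Proof.
rewrite (reindex (@enum_rank T)) //; apply: onW_bij; exact: enum_rank_bij.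
Qed.

Lemma psd_one (R : realType) n : psd_mx (1%:M : 'M[R[i]]_n).
Proof.
split=> [i j|v]; first by rewrite !mxE eq_sym rmorph_nat.
rewrite sumr_ge0 // => i _; rewrite (bigD1 i) //= big1 ?addr0.
  by rewrite mxE eqxx mulr1 mulrC mul_conjC_ge0.
by move=> j /negPf ij; rewrite mxE eq_sym ij mulr0 mul0r.
Qed.

Lemma psd_vand (R : realType) n (lam : R[i]) :
  psd_mx (\matrix_(k < n, l < n) (lam^* ^+ k * lam ^+ l)).
Proof.
split=> [i j|v].
  rewrite !mxE rmorphM !rmorphXn mulrC; congr (_ * _); congr (_ ^+ _).
  exact: (esym (conjCK _)).
have -> : \sum_(i < n) \sum_(j < n) (v i)^* * (\matrix_(k < n, l < n) (lam^* ^+ k * lam ^+ l)) i j * v j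
   = (\sum_(i < n) lam ^+ i * v i)^* * (\sum_(j < n) lam ^+ j * v j).
  rewrite rmorph_sum mulr_suml; apply: eq_bigr => i _.
  rewrite mulr_sumr; apply: eq_bigr => j _.
  rewrite mxE rmorphM rmorphXn; ring.
by rewrite mulrC mul_conjC_ge0.
Qed.

Theorem theorem5p1 (R : realType) (n : nat) (V : lmodType R[i])
    (ip : V -> V -> R[i]) (phi : 'M[R[i]]_n -> V -> V) :
  is_hilbert ip -> linear_to_BH ip phi -> positive_map ip phi ->
  forall (p : nat) (X : 'I_p -> 'I_p -> 'M[R[i]]_n),
    (forall a b, toeplitz (X a b)) ->
    block_psd X ->
    forall h : 'I_p -> V,
      0 <= \sum_(a < p) \sum_(b < p) ip (phi (X a b) (h b)) (h a).
Proof.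
move=> [ipL ipC ipge0 ipdef _] [phiL phiB] phipos p X Xt [XH Xpsd] h.
have phiLh : forall h0 a (A B : 'M[R[i]]_n), phi (a *: A + B) h0 = a *: phi A h0 + phi B h0.
  by move=> h0 a A B; apply: phiL.
have ip0 : forall z, ip 0 z = 0.
  by move=> z; exact: (F0 (F := fun x => (ip x z : R[i]^o)) (fun a x y => ipL a x y z)).
have [n0|npos] := posnP n.
  rewrite big1 // => a _; rewrite big1 // => b _.
  have -> : X a b = 0 by apply/matrixP => -[k hk] j; exfalso; by rewrite n0 in hk.
  by rewrite (F0 (phiLh (h b))) ip0.
set t := \sum_(a < p) \sum_(b < p) ip (phi (X a b) (h b)) (h a).
pose c0 := \sum_(a < p) ip (phi 1%:M (h a)) (h a).
have c0ge0 : 0 <= c0 by rewrite sumr_ge0 // => a _; apply: phipos; exact: psd_one.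
apply: (eps_lim c0ge0) => e epos.
pose I := ('I_p * 'I_n)%type.
pose N := #|{: I}|.
pose idx : I -> 'I_N := enum_rank.
pose vl : 'I_N -> I := enum_val.
have vlK : forall x, vl (idx x) = x by move=> x; exact: enum_rankK.
have idx_inj : injective idx by exact: enum_rank_inj.
have vl_inj : injective vl by exact: enum_val_inj.
pose o := fun k : nat => insubd (Ordinal npos) k : 'I_n.
have oE : forall k, (k < n)%N -> (o k : nat) = k.
  by move=> k kn; rewrite -[LHS]/(val (o k)) val_insubd kn.
clearbody o.
pose GX : 'M[R[i]]_N := \matrix_(i, j) X (vl i).1 (vl j).1 (vl i).2 (vl j).2.
pose G := GX + e%:M.
pose d : pred 'I_N := fun i => ((vl i).2.+1 < n)%N.
pose s : 'I_N -> 'I_N := fun i => idx ((vl i).1, o (vl i).2.+1).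
have qE : forall v : 'rV_N, (v *m G *m map_mx Num.Def.conjC (v^T)) 0 0
    = (v *m GX *m map_mx Num.Def.conjC (v^T)) 0 0 + e * (v *m map_mx Num.Def.conjC (v^T)) 0 0.
  by move=> v; rewrite /G mulmxDr mulmxDl mul_mx_scalar -scalemxAl !mxE.
have qX : forall v : 'rV_N, 0 <= (v *m GX *m map_mx Num.Def.conjC (v^T)) 0 0.
  move=> v; rewrite quadE; have := Xpsd (fun x => (v 0 (idx x))^*).
  move=> H0; rewrite (sum_enum (T := I)).
  under eq_bigr => x _ do rewrite (sum_enum (T := I)).
  under eq_bigr => x _ do under eq_bigr => y _ do rewrite /GX mxE ?vlK ?enum_rankK.
  move: H0 => /=; under eq_bigr => x _ do under eq_bigr => y _ do rewrite conjCK.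
  by [].
have [m [Xi [U [XiXi Un Ush]]]] : exists m (Xi : 'M[R[i]]_(m, N)) (U : 'M[R[i]]_m),
    [/\ map_mx Num.Def.conjC (Xi^T) *m Xi = G, U \is normalmx &
        forall j, d j -> U *m col j Xi = col (s j) Xi].
  apply: dilation.
  - apply/matrixP => i j; rewrite !mxE rmorphD rmorphMn eq_sym.
    congr (_ + _ *+ _); first by rewrite (XH (vl i) (vl j)); exact: conjCK.
    exact: geC0_conj (ltW epos).
  - by move=> v; rewrite qE addr_ge0 // mulr_ge0 ?(ltW epos) // dot_ge0.
  - move=> v; rewrite qE => /eqP; rewrite paddr_eq0 ?qX ?mulr_ge0 ?(ltW epos) ?dot_ge0 //.
    by case/andP => _; rewrite mulf_eq0 gt_eqF //= => /eqP /dot_eq0.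
  - move=> i j di dj; rewrite /G !mxE /s !vlK.
    have [tau Ht] := Xt (vl i).1 (vl j).1.
    rewrite !Ht.
    rewrite -[(((vl i).1, o (vl i).2.+1).2)]/(o (vl i).2.+1).
    rewrite -[(((vl j).1, o (vl j).2.+1).2)]/(o (vl j).2.+1).
    have := oE _ di; have := oE _ dj.
    move: (o (vl i).2.+1) (o (vl j).2.+1) => ki kj ej ei.
    rewrite ei ej (inj_eq idx_inj).
    have -> : (i == j) = (vl i == vl j) by rewrite (inj_eq vl_inj).
    move: ei ej; move: (vl i) (vl j) => [a k] [b l] /= ei ej.
    rewrite !xpair_eqE.
    have -> : (ki == kj) = (k.+1 == l.+1)%N by rewrite -ei -ej.
    rewrite eqSS; congr (tau _ + _).
    by rewrite !intS opprD addrACA subrr add0r.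
pose w := fun x : I => col (idx x) Xi.
have wS : forall a (k : nat), (k.+1 < n)%N -> U *m w (a, o k) = w (a, o k.+1).
  move=> a k kn; rewrite /w Ush; last by rewrite /d vlK /= oE // ltnW.
  by rewrite /s vlK /= oE // ltnW.
have wk : forall a k, (k < n)%N -> w (a, o k) = iter k (mulmx U) (w (a, o 0)).
  by move=> a; elim=> [//|k IH] kn; rewrite iterS -IH ?(ltnW kn) // wS.
have UE := orthomx_spectralP Un.
set Mu := spectralmx U in UE; set lam := spectral_diag U in UE.
have Mun : Mu \is unitarymx by exact: spectral_unitarymx.
have MMt : Mu *m map_mx Num.Def.conjC (Mu^T) = 1%:M by apply/unitarymxP.
have MtM : map_mx Num.Def.conjC (Mu^T) *m Mu = 1%:M by apply: mulmx1C.
have MuU : Mu *m U = diag_mx lam *m Mu.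
  by rewrite {1}UE invmx_unitary // !mulmxA MMt mul1mx.
clearbody Mu lam.
have iterM : forall (k : nat) (v : 'cV[R[i]]_m),
    Mu *m iter k (mulmx U) v = iter k (mulmx (diag_mx lam)) (Mu *m v).
  by elim=> [//|k IH] v /=; rewrite mulmxA MuU -mulmxA IH.
have iterD : forall (k : nat) (z : 'cV[R[i]]_m) r, (iter k (mulmx (diag_mx lam)) z) r 0 = lam 0 r ^+ k * z r 0.
  elim=> [|k IH] z r /=; first by rewrite mul1r.
  by rewrite mul_diag_mx mxE IH exprS mulrA.
have gram : forall i j, G i j = \sum_r ((Mu *m col i Xi) r 0)^* * (Mu *m col j Xi) r 0.
  move=> i j.
  have -> : \sum_r ((Mu *m col i Xi) r 0)^* * (Mu *m col j Xi) r 0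
      = (map_mx Num.Def.conjC ((Mu *m col i Xi)^T) *m (Mu *m col j Xi)) 0 0.
    by rewrite mxE; apply: eq_bigr => r _; rewrite !mxE.
  rewrite adjM -mulmxA (mulmxA (map_mx _ (Mu^T))) MtM mul1mx -XiXi !mxE.
  by apply: eq_bigr => r _; rewrite !mxE.
pose y := fun a r => (Mu *m w (a, o 0)) r 0.
have oK : forall k : 'I_n, o k = k by move=> k; apply: val_inj; rewrite /= oE.
have Xent : forall a b (k l : 'I_n),
    X a b k l + e * ((a == b) && (k == l))%:R
    = \sum_r (lam 0 r ^+ k * y a r)^* * (lam 0 r ^+ l * y b r).
  have Gent : forall x y : I, G (idx x) (idx y) = X x.1 y.1 x.2 y.2 + e * (x == y)%:R.
    by move=> x0 y0; rewrite /G !mxE !vlK (inj_eq idx_inj) mulr_natr.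
  have wak : forall a (k : 'I_n), col (idx (a, k)) Xi = iter k (mulmx U) (w (a, o 0)).
    by move=> a0 k0; rewrite -{1}(oK k0); exact: wk.
  move=> a b k l; have := gram (idx (a, k)) (idx (b, l)).
  rewrite Gent -[X a b k l]/(X (a, k).1 (b, l).1 (a, k).2 (b, l).2) -xpair_eqE => ->.
  rewrite !wak !iterM.
  by apply: eq_bigr => r _; rewrite !iterD.
pose Vm := fun r => \matrix_(k < n, l < n) ((lam 0 r)^* ^+ k * lam 0 r ^+ l).
have XE : forall a b, X a b = \sum_r ((y a r)^* * y b r) *: Vm r - (e * (a == b)%:R) *: 1%:M.
  move=> a b; apply/matrixP => k l; rewrite !mxE summxE.
  rewrite -[X a b k l](addrK (e * ((a == b) && (k == l))%:R)) Xent.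
  rewrite -mulrA -natrM mulnb; congr (_ - _).
  apply: eq_bigr => r _; rewrite !mxE rmorphM rmorphXn; ring.
have ipZ : forall a x z, ip (a *: x) z = a * ip x z.
  by move=> a0 x z; exact: (FZ (F := fun x => (ip x z : R[i]^o)) (fun a x y => ipL a x y z)).
have phiE : forall (c : 'I_m -> R[i]) (A : 'I_m -> 'M[R[i]]_n) (be : R[i]) B z,
    phi (\sum_r c r *: A r - be *: B) z = \sum_r c r *: phi (A r) z - be *: phi B z.
  move=> c A be B z; rewrite (FB (phiLh z)) (F_sum (phiLh z)) (FZ (phiLh z)).
  by congr (_ - _); apply: eq_bigr => r _; rewrite (FZ (phiLh z)).
pose g := fun r => \sum_(b < p) y b r *: h b.
have tE : t = \sum_r ip (phi (Vm r) (g r)) (g r) - e * c0.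
  rewrite /t.
  under eq_bigr => a _ do under eq_bigr => b _ do
    rewrite XE phiE (ipBl ipL) (ip_sumZl ipL) ipZ.
  under eq_bigr => a _ do rewrite sumrB.
  rewrite sumrB; congr (_ - _).
    rewrite exchange_big /=; under eq_bigr => b _ do rewrite exchange_big /=.
    rewrite exchange_big /=; apply: eq_bigr => r _.
    rewrite /g (ip_quad ipL ipC (proj1 (phiB (Vm r)))) exchange_big /=.
    by apply: eq_bigr => a _; apply: eq_bigr => b _.
  rewrite /c0 mulr_sumr; apply: eq_bigr => a _.
  rewrite (bigD1 a) //= eqxx mulr1 big1 ?addr0 // => b /negPf.
  by rewrite eq_sym => ->; rewrite mulr0 mul0r.
rewrite tE subrK; apply: sumr_ge0 => r _; apply: phipos; exact: psd_vand.
Qed.
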